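(* Let $U\subset\mathbb{H}^n$ be a domain. For any $v\in C^\infty(U)$, $$\Big||D_0^2v\,Xv|^2-\Delta_0v\,\Delta_{0,\infty}v-\frac12\big[|D_0^2v|^2-(\Delta_0v)^2\big]|Xv|^2\Big|\le(n-1)\Big[|D_0^2v|^2|Xv|^2-|D_0^2v\,Xv|^2\Big]\quad\text{in } U.$$
   Context: The Heisenberg group $\mathbb{H}^n$ is $\mathbb{R}^{2n}\times\mathbb{R}$ with the group law $(x,t)\cdot(x',t')=(x+x',\,t+t'-\frac12\sum_{i=1}^n[x_ix'_{i+n}-x_{i+n}x'_i])$, with left-invariant vector fields $X_i=\partial_{x_i}-\frac{x_{i+n}}{2}\partial_t$, $X_{i+n}=\partial_{x_{i+n}}+\frac{x_i}{2}\partial_t$ ($i=1,\dots,n$). For $v$, $Xv=(X_1v,\dots,X_{2n}v)$ (a column vector), $|Xv|$ its Euclidean norm, $\Delta_0v=\sum_{i=1}^{2n}X_iX_iv$, $D_0^2v=\big(\frac12[X_iX_jv+X_jX_iv]\big)_{i,j=1}^{2n}$ with Frobenius norm $|D_0^2v|$, $D_0^2v\,Xv$ the matrix-vector product, and $\Delta_{0,\infty}v=\sum_{i,j=1}^{2n}X_iv\,X_iX_jv\,X_jv=(Xv)^TD_0^2v\,Xv$. *)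

(* Defs.v *)
From HB Require Import structures.
From mathcomp Require Import all_boot all_order all_algebra.
From mathcomp Require Import all_classical all_reals all_analysis.
Set Implicit Arguments. Unset Strict Implicit. Unset Printing Implicit Defensive.
Import Order.TTheory GRing.Theory Num.Theory.
Import numFieldNormedType.Exports.
Local Open Scope classical_set_scope.
Local Open Scope ring_scope.

(* Points of the Heisenberg group H^n = R^{2n} x R: a pair (x, t),
   x : 'rV_(n+n) with coordinates x_1..x_{2n} (0-indexed: lshift n j is x_{j+1},
   rshift n j is x_{j+1+n}), t : R. *)
Definition Hn (R : realType) (n : nat) := ('rV[R]_(n + n) * R^o)%type.

(* The vector (in R^{2n} x R) representing the left-invariant vector field X_i at p:
   X_j     = d/dx_j     - x_{j+n}/2 d/dt   (i = lshift n j)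
   X_{j+n} = d/dx_{j+n} + x_j/2     d/dt   (i = rshift n j). *)
Definition Xdir (R : realType) (n : nat) (i : 'I_(n + n)) (p : Hn R n) : Hn R n :=
  (delta_mx 0 i,
   match fintype.split i with
   | inl j => - (p.1 0 (rshift n j)) / 2
   | inr j => (p.1 0 (lshift n j)) / 2
   end).

Definition Xf (R : realType) (n : nat) (i : 'I_(n + n)) (v : Hn R n -> R) : Hn R n -> R :=
  fun p => 'D_(Xdir i p) v p.

Definition Xgrad (R : realType) (n : nat) (v : Hn R n -> R) (p : Hn R n) : 'cV[R]_(n + n) :=
  \col_i Xf i v p.

Definition D02 (R : realType) (n : nat) (v : Hn R n -> R) (p : Hn R n) : 'M[R]_(n + n) :=
  \matrix_(i, j) ((Xf i (Xf j v) p + Xf j (Xf i v) p) / 2).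

Definition Delta0 (R : realType) (n : nat) (v : Hn R n -> R) (p : Hn R n) : R :=
  \sum_i Xf i (Xf i v) p.

Definition Delta0inf (R : realType) (n : nat) (v : Hn R n -> R) (p : Hn R n) : R :=
  \sum_i \sum_j Xf i v p * Xf i (Xf j v) p * Xf j v p.

Definition sqnormc (R : realType) (m : nat) (w : 'cV[R]_m) : R := \sum_i (w i 0) ^+ 2.
Definition sqfrob (R : realType) (m : nat) (A : 'M[R]_m) : R := \sum_i \sum_j (A i j) ^+ 2.

Fixpoint iter_deriv (R : realType) (V : normedModType R) (ds : seq V) (f : V -> R) : V -> R :=
  match ds with
  | [::] => f
  | d :: ds' => fun x => 'D_d (iter_deriv ds' f) x
  end.

Definition smooth_on (R : realType) (V : normedModType R) (U : set V) (f : V -> R) : Prop :=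
  forall (ds : seq V) (x : V), U x -> differentiable (iter_deriv ds f) x.

(* Main.v *)
Require Import Defs.
From HB Require Import structures.
From mathcomp Require Import all_boot all_order all_algebra.
From mathcomp Require Import all_classical all_reals all_analysis.
Import Order.TTheory GRing.Theory Num.Theory.
Import numFieldNormedType.Exports.
Local Open Scope classical_set_scope.
Local Open Scope ring_scope.

From mathcomp Require Import ring lra.
Set Implicit Arguments. Unset Strict Implicit. Unset Printing Implicit Defensive.
Section Alg.
Variable R : realFieldType.

Lemma quad_disc (a b c : R) : 0 <= b ->
  (forall t, 0 <= a - 2 * t * c + t ^+ 2 * b) -> c ^+ 2 <= a * b.
Proof.
move=> b0 H.
have [bE|bn0] := eqVneq b 0.
  rewrite bE in H *.
  have [->|cn0] := eqVneq c 0; first by rewrite expr0n mulr0.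
  have h := H ((a + 1) / (2 * c)); rewrite mulr0 addr0 in h.
  suff: False by [].
  move: h.
  have -> : a - 2 * ((a + 1) / (2 * c)) * c = -1.
    by field.
  by move=> h; lra.
have bp : 0 < b by rewrite lt_def bn0.
have := H (c / b).
have -> : a - 2 * (c / b) * c + (c / b) ^+ 2 * b = (a * b - c ^+ 2) / b by field.
by rewrite pmulr_lge0 ?invr_gt0 // subr_ge0.
Qed.

Lemma trsq m k (C : 'M[R]_(m, k)) : \tr (C *m C^T) = \sum_i \sum_j C i j ^+ 2.
Proof.
rewrite /mxtrace; apply: eq_bigr => i _; rewrite mxE; apply: eq_bigr => j _.
by rewrite mxE expr2.
Qed.

Lemma trsq_ge0 m k (C : 'M[R]_(m, k)) : 0 <= \tr (C *m C^T).
Proof. by rewrite trsq; apply: sumr_ge0 => i _; apply: sumr_ge0 => j _; exact: sqr_ge0. Qed.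

Lemma tr_CS m k (A B : 'M[R]_(m, k)) :
  \tr (A *m B^T) ^+ 2 <= \tr (A *m A^T) * \tr (B *m B^T).
Proof.
apply: quad_disc; first exact: trsq_ge0.
move=> t; have := trsq_ge0 (A - t *: B).
have -> : (A - t *: B)^T = A^T - t *: B^T.
  by rewrite raddfB /= [(t *: B)^T]linearZ.
rewrite mulmxBl !mulmxBr !raddfB /= -!scalemxAl -!scalemxAr.
rewrite !mxtraceZ -[\tr (B *m A^T)]mxtrace_tr trmx_mul trmxK.
move=> h; apply: (le_trans h); rewrite le_eqVlt; apply/orP; left; apply/eqP.
by ring.
Qed.

Lemma tr11 (A : 'M[R]_1) : \tr A = A 0 0.
Proof. by rewrite /mxtrace big_ord1. Qed.

Lemma mx11E (A : 'M[R]_1) : A = (\tr A)%:M.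
Proof. by rewrite tr11 {1}(mx11_scalar A). Qed.

End Alg.
Section Key.
Variable R : realFieldType.
Variable N : nat.
Variables (M : 'M[R]_N) (w : 'cV[R]_N).
Hypothesis symM : M^T = M.

Let s := \tr (w^T *m w).
Let q := \tr (w^T *m M *m w).
Let r := \tr ((M *m w)^T *m (M *m w)).
Let F := \tr (M *m M^T).
Let T := \tr M.

Lemma rq : q ^+ 2 <= r * s.
Proof.
have := tr_CS (w^T) ((M *m w)^T).
by rewrite trmxK !trmxK mulrC mulmxA.
Qed.

Let W := w *m w^T.
Let P := s%:M - W.

Lemma ww : w^T *m w = s%:M. Proof. exact: mx11E. Qed.
Lemma wMw : w^T *m M *m w = q%:M. Proof. exact: mx11E. Qed.

Lemma PT : P^T = P.
Proof. by rewrite /P raddfB /= tr_scalar_mx /W trmx_mul trmxK. Qed.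

Lemma WW : W *m W = s *: W.
Proof. by rewrite /W mulmxA -[w *m w^T *m w]mulmxA ww mul_mx_scalar -scalemxAl. Qed.

Lemma PP : P *m P = s *: P.
Proof.
rewrite /P mulmxBl !mulmxBr mul_scalar_mx mul_mx_scalar WW mul_scalar_mx.
by rewrite subrr subr0 scalerBr.
Qed.

Lemma trMP : \tr (M *m P) = s * T - q.
Proof.
rewrite /P mulmxBr mul_mx_scalar raddfB /= mxtraceZ /W mulmxA mxtrace_mulC mulmxA.
by [].
Qed.

Lemma trPYP (Y : 'M[R]_N) : \tr (P *m Y *m P) = s * \tr (Y *m P).
Proof.
by rewrite mxtrace_mulC mulmxA PP -scalemxAl mxtraceZ mxtrace_mulC.
Qed.

Lemma c1 : \tr (P *m M *m P *m P^T) = s ^+ 2 * (s * T - q).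
Proof.
rewrite PT -mulmxA PP -scalemxAr mxtraceZ trPYP trMP; ring.
Qed.

Lemma c3 : \tr (P *m P^T) = s ^+ 2 * (N%:R - 1).
Proof.
rewrite PT PP mxtraceZ /P raddfB /= mxtrace_scalar /W mxtrace_mulC -/s.
rewrite -mulr_natr; ring.
Qed.

Lemma tMM : \tr (M *m M) = F.
Proof. by rewrite /F symM. Qed.

Lemma tMMW : \tr (M *m (M *m W)) = r.
Proof.
rewrite /W /r trmx_mul symM !mulmxA mxtrace_mulC !mulmxA; by [].
Qed.

Lemma tMWM : \tr (M *m W *m M) = r.
Proof. by rewrite mxtrace_mulC tMMW. Qed.

Lemma tMWMW : \tr (M *m W *m (M *m W)) = q ^+ 2.
Proof.
have -> : M *m W *m (M *m W) = (M *m w) *m (w^T *m M *m w) *m w^T.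
  by rewrite /W !mulmxA.
rewrite wMw mul_mx_scalar -scalemxAl mxtraceZ mxtrace_mulC mulmxA expr2.
by [].
Qed.

Lemma c2 : \tr (P *m M *m P *m (P *m M *m P)^T) = s ^+ 2 * (s ^+ 2 * F - 2 * s * r + q ^+ 2).
Proof.
rewrite !trmx_mul symM PT.
have -> : P *m M *m P *m (P *m (M *m P)) = P *m (M *m (P *m P) *m M) *m P.
  by rewrite !mulmxA.
rewrite trPYP PP -scalemxAr -!scalemxAl mxtraceZ -mulmxA.
have -> : M *m P = s *: M - M *m W by rewrite /P mulmxBr mul_mx_scalar.
rewrite mulmxBl !mulmxBr -!scalemxAl -!scalemxAr !raddfB /= !mxtraceZ.
rewrite tMM tMMW tMWM tMWMW; ring.
Qed.




Lemma bounds : 0 < s ->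
  0 <= s ^+ 2 * F - 2 * s * r + q ^+ 2 /\
  (s * T - q) ^+ 2 <= (N%:R - 1) * (s ^+ 2 * F - 2 * s * r + q ^+ 2).
Proof.
move=> sp.
have s2p : 0 < s ^+ 2 by rewrite exprn_gt0.
have h := trsq_ge0 (P *m M *m P); rewrite c2 pmulr_rge0 // in h.
split => //.
have := tr_CS (P *m M *m P) P; rewrite c1 c2 c3.
have -> : (s ^+ 2 * (s * T - q)) ^+ 2 = s ^+ 2 * (s ^+ 2 * (s * T - q) ^+ 2) by ring.
have -> : s ^+ 2 * (s ^+ 2 * F - 2 * s * r + q ^+ 2) * (s ^+ 2 * (N%:R - 1))
   = s ^+ 2 * (s ^+ 2 * ((N%:R - 1) * (s ^+ 2 * F - 2 * s * r + q ^+ 2))) by ring.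
by rewrite !ler_pM2l.
Qed.

Lemma s0 : s = 0 -> w = 0.
Proof.
move=> h; have := h; rewrite /s.
have -> : w^T *m w = w^T *m w^T^T by rewrite trmxK.
rewrite trsq => /eqP.
rewrite psumr_eq0; last by move=> i _; apply: sumr_ge0 => j _; exact: sqr_ge0.
move=> /allP H; apply/matrixP => i j; rewrite (ord1 j) mxE.
have := H 0 (mem_index_enum _); rewrite implyTb psumr_eq0; last by move=> k _; exact: sqr_ge0.
move=> /allP H2; have := H2 i (mem_index_enum _).
by rewrite implyTb mxE sqrf_eq0 => /eqP.
Qed.

End Key.

Lemma fin (R : realFieldType) (s q r F T m : R) : 2 <= m -> 0 < s ->
  0 <= s ^+ 2 * F - 2 * s * r + q ^+ 2 ->
  (s * T - q) ^+ 2 <= (2 * m - 1) * (s ^+ 2 * F - 2 * s * r + q ^+ 2) ->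
  q ^+ 2 <= r * s ->
  `| r - T * q - (F - T ^+ 2) / 2 * s | <= (m - 1) * (F * s - r).
Proof.
move=> m2 sp X0 YX Z0.
set X := s ^+ 2 * F - 2 * s * r + q ^+ 2 in X0 YX.
set Y := (s * T - q) ^+ 2 in YX.
have Y0 : 0 <= Y by exact: sqr_ge0.
have hA : r - T * q - (F - T ^+ 2) / 2 * s = (Y - X) / (2 * s).
  by rewrite /X /Y; field; rewrite gt_eqF.
have hB : F * s - r = (X + (r * s - q ^+ 2)) / s.
  by rewrite /X; field; rewrite gt_eqF.
rewrite hA hB.
have -> : (m - 1) * ((X + (r * s - q ^+ 2)) / s) = (2 * (m - 1) * (X + (r * s - q ^+ 2))) / (2 * s).
  by field; rewrite gt_eqF.
have s2 : 0 < (2 * s)^-1 by rewrite invr_gt0 mulr_gt0.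
rewrite normrM (ger0_norm (ltW (s2 : 0 < (2 * s)^-1))) ?ler_pM2r ?invr_gt0 //.
  rewrite ler_norml; apply/andP; split; nra.
by rewrite mulr_gt0.
Qed.


Lemma big2 (R : realFieldType) (f : 'I_2 -> R) : \sum_(i < 2) f i = f ord0 + f ord_max.
Proof. by rewrite big_ord_recr big_ord1 /=; congr (f _ + _); apply: val_inj. Qed.

Lemma two (R : realFieldType) (M : 'M[R]_2) (w : 'cV[R]_2) : M^T = M ->
  \tr ((M *m w)^T *m (M *m w)) - \tr M * \tr (w^T *m M *m w)
   - (\tr (M *m M^T) - \tr M ^+ 2) / 2 * \tr (w^T *m w) = 0.
Proof.
move=> /matrixP symM; have h := symM ord0 ord_max; rewrite mxE in h.
rewrite /mxtrace !big2 !mxE !big2 !mxE !big_ord1 !mxE !big2 !mxE !big2 !mxE.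
by rewrite -h; field.
Qed.

Lemma main_alg (R : realFieldType) (n : nat) (hn : (0 < n)%N) (M : 'M[R]_(n + n))
  (w : 'cV[R]_(n + n)) : M^T = M ->
  `| \tr ((M *m w)^T *m (M *m w)) - \tr M * \tr (w^T *m M *m w)
   - (\tr (M *m M^T) - \tr M ^+ 2) / 2 * \tr (w^T *m w) |
  <= (n%:R - 1) * (\tr (M *m M^T) * \tr (w^T *m w) - \tr ((M *m w)^T *m (M *m w))).
Proof.
move=> symM.
have s0' : 0 <= \tr (w^T *m w).
  by have := trsq_ge0 w^T; rewrite trmxK.
have [sE|sp] : \tr (w^T *m w) = 0 \/ 0 < \tr (w^T *m w).
  by move: s0'; rewrite le_eqVlt => /orP [/eqP ->|->]; [left|right].
  have wz := s0 sE.
  have -> : M *m w = 0 by apply/matrixP => i j; rewrite wz !mxE big1 // => k _; rewrite [w in _ * w]mxE mulr0.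
  have -> : \tr (w^T *m M *m w) = 0.
    by rewrite tr11 mxE big1 // => k _; rewrite wz [w in _ * w]mxE mulr0.
  rewrite sE trmx0 mul0mx.

  by rewrite mxtrace0 !mulr0 !subr0 normr0 mulr0.
case: n hn M w symM s0' sp => [//|[|n]] _ M w symM s0' sp.
  by rewrite two // normr0 subrr mul0r.
have [X0 YX] := bounds symM sp.
apply: fin => //.
- by rewrite ler_nat.
- have e : (2 * (n.+2)%:R - 1 : R) = ((n.+2 + n.+2)%:R - 1) by rewrite natrD; ring.
  by rewrite e.
- exact: rq.
Qed.

Lemma sqnormcE (R : realType) m (u : 'cV[R]_m) : sqnormc u = \tr (u^T *m u).
Proof.
have -> : u^T *m u = u^T *m u^T^T by rewrite trmxK.
by rewrite trsq big_ord1 /sqnormc; apply: eq_bigr => i _; rewrite mxE.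
Qed.

Lemma sqfrobE (R : realType) m (A : 'M[R]_m) : sqfrob A = \tr (A *m A^T).
Proof. by rewrite trsq. Qed.

Lemma half2 (R : realType) (a : R) : (a + a) / 2 = a.
Proof. by field. Qed.

Section Gen.
Variable R : realFieldType.
Variable N : nat.
Variable h : 'I_N -> 'I_N -> R.
Variable g : 'I_N -> R.

Lemma half2' (a : R) : (a + a) / 2 = a.
Proof. by field. Qed.

Lemma symG : (\matrix_(i, j) ((h i j + h j i) / 2))^T = \matrix_(i, j) ((h i j + h j i) / 2).
Proof. by apply/matrixP => i j; rewrite !mxE addrC. Qed.

Lemma trG : \sum_i h i i = \tr (\matrix_(i, j) ((h i j + h j i) / 2)).
Proof. by rewrite /mxtrace; apply: eq_bigr => i _; rewrite mxE half2'. Qed.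

Lemma qG : \sum_i \sum_j g i * h i j * g j =
  \tr ((\col_i g i)^T *m (\matrix_(i, j) ((h i j + h j i) / 2)) *m \col_i g i).
Proof.
set a := fun i j => g i * h i j * g j.
have E : \tr ((\col_i g i)^T *m (\matrix_(i, j) ((h i j + h j i) / 2)) *m \col_i g i)
   = \sum_i \sum_j (a i j / 2 + a j i / 2).
  rewrite tr11 mxE [RHS]exchange_big /=; apply: eq_bigr => j _.
  rewrite [X in X * _]mxE mulr_suml; apply: eq_bigr => i _.
  rewrite !mxE /a; ring.
have E2 : \sum_i \sum_j (a i j / 2 + a j i / 2)
    = \sum_i \sum_j a i j / 2 + \sum_i \sum_j a j i / 2.
  by rewrite -big_split; apply: eq_bigr => i _; rewrite big_split.
have E3 : \sum_i \sum_j a j i / 2 = \sum_i \sum_j a i j / 2 by rewrite exchange_big.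
rewrite E E2 E3 -big_split; apply: eq_bigr => i _; rewrite -big_split.
apply: eq_bigr => j _ /=; rewrite /a; by field.
Qed.
End Gen.

Theorem lemma3p3 (R : realType) (n : nat) (hn : (0 < n)%N)
  (U : set (Hn R n)) (hUo : open U) (hUc : connected U) (hU0 : U !=set0)
  (v : Hn R n -> R) (hv : smooth_on U v) :
  forall p : Hn R n, U p ->
    `| sqnormc (D02 v p *m Xgrad v p) - Delta0 v p * Delta0inf v p
       - (sqfrob (D02 v p) - (Delta0 v p) ^+ 2) / 2 * sqnormc (Xgrad v p) |
    <= (n%:R - 1) * (sqfrob (D02 v p) * sqnormc (Xgrad v p)
                     - sqnormc (D02 v p *m Xgrad v p)).
Proof.
move=> p _.
rewrite !sqnormcE sqfrobE.
have E1 := trG (fun i j => Xf i (Xf j v) p).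
have E2 := qG (fun i j => Xf i (Xf j v) p) (fun i => Xf i v p).
rewrite /Delta0 /Delta0inf E1 E2.
exact: main_alg hn _ _ (symG (fun i j => Xf i (Xf j v) p)).
Qed.
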